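(* Let $\mathbf L$ be an algebraic lattice with an equa-interior operator $\eta$ satisfying \[ (\dagger)\qquad \tau(x)\le\tau(c)\ \&\ \eta(z)\le c\ \implies\ \eta(\eta(z)\vee\tau(x\wedge z))\le c \quad\text{for all }x,z,c\in L. \] Then $(\mathbf L,\eta)$ satisfies the four-coatom condition: whenever $a,b,c,d$ are coatoms of $\mathbf L$ such that $a\sim d$, $\eta(a)\not\le d$, $\eta(c)\le d$ and $\eta(c)=\eta(a\wedge b)$, then $\eta(c)=\eta(b\wedge d)$.
   Context: An equa-interior operator on an algebraic lattice $\mathbf L$ is a map $\eta:L\to L$ such that for all $x,y,z\in L$: (I1) $\eta(x)\le x$; (I2) $x\ge y$ implies $\eta(x)\ge\eta(y)$; (I3) $\eta^2(x)=\eta(x)$; (I4) $\eta(1)=1$; (I5) if $\eta(x)=u$ for all $x\in X\subseteq L$ then $\eta(\bigvee X)=u$; (I6) $\eta(x)\vee(y\wedge z)=(\eta(x)\vee y)\wedge(\eta(x)\vee z)$; (I7) the image $\eta(L)$ is the complete join subsemilattice of $L$ generated by the elements of $\eta(L)$ that are compact in $\mathbf L$; (I8) there is a compact element $w\in L$ with $\eta(w)=w$ such that the interval $[w,1]$ is isomorphic to the congruence lattice of a join semilattice with $0$. Define $\tau(x)=\bigvee\{z\in L:\eta(z)=\eta(x)\}$. For coatoms $a,d$, $a\sim d$ means the principal filter ${\uparrow}(a\wedge d)$ has exactly four elements, namely $\{1,a,d,a\wedge d\}$. *)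

(* Defs.v *)
From mathcomp Require Import all_boot all_order.
Set Implicit Arguments. Unset Strict Implicit. Unset Printing Implicit Defensive.
Import Order.LTheory.
Local Open Scope order_scope.

Section EquaInterior.
Context {disp : Order.disp_t} {L : tbLatticeType disp}.

Definition is_lub (X : L -> Prop) (s : L) : Prop :=
  (forall x, X x -> x <= s) /\ (forall u, (forall x, X x -> x <= u) -> s <= u).

Definition complete_lattice : Prop := forall X : L -> Prop, exists s, is_lub X s.

Definition compact (c : L) : Prop :=
  forall (X : L -> Prop) (s : L), is_lub X s -> c <= s ->
    exists F : seq L, (forall x, x \in F -> X x) /\ c <= \join_(x <- F) x.

Definition algebraic_lattice : Prop :=
  complete_lattice /\ forall x : L, is_lub (fun c => compact c /\ c <= x) x.

End EquaInterior.

(* congruences of a join semilattice with 0 (S, \/, 0): equivalence relations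
   compatible with the join (compatibility with the constant 0 is automatic) *)
Definition js_congruence {d'} {S : bJoinSemilatticeType d'} (th : S -> S -> Prop) : Prop :=
  (forall a, th a a) /\ (forall a b, th a b -> th b a) /\
  (forall a b c, th a b -> th b c -> th a c) /\
  (forall a b a' b', th a b -> th a' b' -> th (a `|` a') (b `|` b')).

Section EquaInterior2.
Context {disp : Order.disp_t} {L : tbLatticeType disp}.

Definition interval_iso_Con (w : L) : Prop :=
  exists (d' : Order.disp_t) (S : bJoinSemilatticeType d') (f : L -> S -> S -> Prop),
    (forall x, w <= x -> js_congruence (f x)) /\
    (forall x y, w <= x -> w <= y ->
       (x <= y <-> (forall a b, f x a b -> f y a b))) /\
    (forall th : S -> S -> Prop, js_congruence th ->
       exists x, w <= x /\ forall a b, f x a b <-> th a b).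

Definition equa_interior (eta : L -> L) : Prop :=
  (forall x, eta x <= x) /\
  (forall x y, y <= x -> eta y <= eta x) /\
  (forall x, eta (eta x) = eta x) /\
  (eta \top = \top) /\
  (forall (X : L -> Prop) (u s : L), (exists x, X x) ->
              (forall x, X x -> eta x = u) -> is_lub X s -> eta s = u) /\
  (forall x y z, eta x `|` (y `&` z) = (eta x `|` y) `&` (eta x `|` z)) /\
  (forall y, (exists x, eta x = y) <->
              exists X : L -> Prop,
                (forall c, X c -> compact c /\ exists x, eta x = c) /\ is_lub X y) /\
  (exists w, compact w /\ eta w = w /\ interval_iso_Con w).

Definition is_tau (eta tau : L -> L) : Prop :=
  forall x, is_lub (fun z => eta z = eta x) (tau x).

Definition coatom (a : L) : Prop :=
  a != \top /\ forall x, a <= x -> x = a \/ x = \top.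

Definition sim (a d : L) : Prop :=
  (forall x, a `&` d <= x <-> (x = \top \/ x = a \/ x = d \/ x = a `&` d)) /\
  (\top != a /\ \top != d /\ \top != a `&` d /\ a != d /\ a != a `&` d /\ d != a `&` d).

Definition four_coatom_condition (eta : L -> L) : Prop :=
  forall a b c d : L, coatom a -> coatom b -> coatom c -> coatom d ->
    sim a d -> ~ (eta a <= d) -> eta c <= d -> eta c = eta (a `&` b) ->
    eta c = eta (b `&` d).

End EquaInterior2.

(* Main.v *)
Require Import Defs.
From mathcomp Require Import all_boot all_order.
Import Order.LTheory.
Local Open Scope order_scope.

Theorem theorem6p3 (disp : Order.disp_t) (L : tbLatticeType disp) (eta tau : L -> L) :
  algebraic_lattice (L := L) ->
  equa_interior eta ->
  is_tau eta tau ->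
  (forall x z c : L, tau x <= tau c -> eta z <= c ->
     eta (eta z `|` tau (x `&` z)) <= c) ->
  four_coatom_condition eta.
Proof.
move=> _ [I1 [I2 [I3 [I4 [I5 _]]]]] Htau Hdag.
have etau : forall x, eta (tau x) = eta x.
  move=> x; apply: (I5 (fun z => eta z = eta x) (eta x) (tau x)).
  - by exists x.
  - by [].
  - exact: Htau.
have taux : forall x, x <= tau x by move=> x; apply: (proj1 (Htau x)).
have topC : forall m : L, m != \top -> \top <= m -> False.
  by move=> m /eqP mT tm; apply: mT; apply/le_anti; rewrite tm lex1.
have tauco : forall m, coatom m -> tau m = m.
  move=> m [mT cm]; case: (cm _ (taux m)) => // Ht.
  exfalso; apply: (topC m mT); rewrite -I4 -Ht etau; exact: I1.
have tauuniq : forall x y, eta x = eta y -> tau x = tau y.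
  move=> x y exy; apply/le_anti/andP; split.
  - apply: (proj2 (Htau x)) => z ez; apply: (proj1 (Htau y)); by rewrite ez.
  - apply: (proj2 (Htau y)) => z ez; apply: (proj1 (Htau x)); by rewrite ez.
move=> a b c d ca cb cc cd [sim1 [_ [_ [_ _]]]] nad ecd ecab.
have ecb : eta c <= b by rewrite ecab; apply: le_trans (I1 _) (leIr _ _).
have eca : eta c <= a by rewrite ecab; apply: le_trans (I1 _) (leIl _ _).
have e2 : eta (a `&` b `&` d) = eta c.
  apply/le_anti/andP; split.
  - by rewrite ecab; apply: I2; apply: leIl.
  - rewrite -I3; apply: I2; by rewrite !lexI eca ecb ecd.
have t3 : tau (a `&` b `&` d) = c by rewrite (tauuniq _ _ e2) tauco.
have tad : tau (a `&` d) <= d.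
  case: (proj1 (sim1 (tau (a `&` d))) (taux _)) => [H|[H|[H|H]]].
  - exfalso; apply: (topC a (proj1 ca)); rewrite -I4 -H etau.
    exact: le_trans (I1 _) (leIl _ _).
  - exfalso; apply: nad; rewrite -H etau; exact: le_trans (I1 _) (leIr _ _).
  - by rewrite H.
  - by rewrite H leIr.
have H := Hdag (a `&` d) (b `&` d) d.
rewrite (tauco d cd) in H.
have E : (a `&` d) `&` (b `&` d) = a `&` b `&` d.
  by rewrite meetACA meetxx.
rewrite E t3 in H.
have H' := H tad (le_trans (I1 _) (leIr _ _)).
have ebdc : eta (b `&` d) <= c.
  case: ((proj2 cc) _ (leUr c (eta (b `&` d)))) => He.
  - by rewrite -He leUl.
  - exfalso; apply: (topC d (proj1 cd)); by rewrite -I4 -He.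
apply/le_anti/andP; split.
- rewrite -I3; apply: I2; by rewrite lexI ecb ecd.
- rewrite -I3; exact: I2.
Qed.
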